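(* If $(d,p)\in\{(6,1),(10,2),(13,3),(14,3),(17,4)\}$, then $\varphi$ has a unique critical point in the interior of $K$ (namely $\mathbf{z}^*$).
   Context: Let $\tau_j=\binom{d}{p}\binom{p}{j}\binom{d-p}{p-j}$ for $0\le j\le p$. Points of $\mathbb{R}^{4p+1}$ are written $\mathbf{z}=(z,(z_{j00},z_{j01},z_{j10},z_{j11})_{j\in[p]})$, with $z_{0\alpha\alpha}=z-\sum_{j\in[p]}z_{j\alpha\alpha}$ ($\alpha\in\{0,1\}$) and $z_{0\alpha\beta}=\frac12-z-\sum_{j\in[p]}z_{j\alpha\beta}$ ($\alpha\ne\beta$). $K$ is the set of $\mathbf{z}$ with $0\le z\le\frac12$ and $z_{j\alpha\beta}\ge0$ for all $0\le j\le p$, $\alpha,\beta\in\{0,1\}$. $A(\mathbf{z})=p+(d-4p)z+\sum_{j\in[p]}j(z_{j00}+z_{j11}-z_{j01}-z_{j10})$, $B=\frac d2-A$, and $\varphi(\mathbf{z})=A\log A+B\log B+\sum_{0\le j\le p,\ \alpha,\beta\in\{0,1\}}(z_{j\alpha\beta}\log\tau_j-z_{j\alpha\beta}\log z_{j\alpha\beta})$. A critical point is a point of the interior of $K$ where the gradient of $\varphi$ vanishes. $\mathbf{z}^*$ has $z^*=\frac14$ and $z^*_{j\alpha\beta}=\tau_j/(4\binom{d}{p}^2)$. *)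

(* Defs.v *)
From Stdlib Require Import Reals Arith Bool.
From Coquelicot Require Import Coquelicot.
Open Scope R_scope.

(* A point z of R^{4p+1} is represented by the pair (z, w) where
   w j a b = z_{j a b} for j in [p] = {1..p} and a b in {0,1} (bool:
   false = 0, true = 1).  Values of w outside 1 <= j <= p are irrelevant. *)

Fixpoint sum1 (n : nat) (f : nat -> R) : R :=
  match n with
  | O => 0
  | S m => sum1 m f + f (S m)
  end.

Definition sum0 (n : nat) (f : nat -> R) : R := f O + sum1 n f.

Definition sum_ab (f : bool -> bool -> R) : R :=
  f false false + f false true + f true false + f true true.

Definition tau (d p j : nat) : R := Binomial.C d p * Binomial.C p j * Binomial.C (d - p) (p - j).

(* z_{j alpha beta} for 0 <= j <= p, with the j = 0 coordinates derived *)
Definition zc (p : nat) (z : R) (w : nat -> bool -> bool -> R)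
    (j : nat) (a b : bool) : R :=
  match j with
  | O => if Bool.eqb a b then z - sum1 p (fun i => w i a b)
         else / 2 - z - sum1 p (fun i => w i a b)
  | S _ => w j a b
  end.

Definition Afun (d p : nat) (z : R) (w : nat -> bool -> bool -> R) : R :=
  INR p + (INR d - 4 * INR p) * z
  + sum1 p (fun j => INR j * (w j false false + w j true true
                              - w j false true - w j true false)).

Definition Bfun (d p : nat) (z : R) (w : nat -> bool -> bool -> R) : R :=
  INR d / 2 - Afun d p z w.

Definition phi (d p : nat) (z : R) (w : nat -> bool -> bool -> R) : R :=
  Afun d p z w * ln (Afun d p z w) + Bfun d p z w * ln (Bfun d p z w)
  + sum0 p (fun j => sum_ab (fun a b =>
       zc p z w j a b * ln (tau d p j) - zc p z w j a b * ln (zc p z w j a b))).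

Definition inK (p : nat) (z : R) (w : nat -> bool -> bool -> R) : Prop :=
  0 <= z <= / 2 /\
  forall j a b, (j <= p)%nat -> 0 <= zc p z w j a b.

Definition inIntK (p : nat) (z : R) (w : nat -> bool -> bool -> R) : Prop :=
  exists eps, 0 < eps /\
    forall (z' : R) (w' : nat -> bool -> bool -> R),
      Rabs (z' - z) < eps ->
      (forall j a b, (1 <= j <= p)%nat -> Rabs (w' j a b - w j a b) < eps) ->
      inK p z' w'.

Definition upd (w : nat -> bool -> bool -> R) (j : nat) (a b : bool) (t : R)
  : nat -> bool -> bool -> R :=
  fun j' a' b' => if (Nat.eqb j' j && Bool.eqb a' a && Bool.eqb b' b)%bool
                  then t else w j' a' b'.

Definition critical (d p : nat) (z : R) (w : nat -> bool -> bool -> R) : Prop :=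
  inIntK p z w /\
  is_derive (fun t => phi d p t w) z 0 /\
  forall j a b, (1 <= j <= p)%nat ->
    is_derive (fun t => phi d p z (upd w j a b t)) (w j a b) 0.

Definition wstar (d p : nat) : nat -> bool -> bool -> R :=
  fun j _ _ => tau d p j / (4 * (Binomial.C d p) ^ 2).

(* Main.v *)
Require Import Defs.
From Stdlib Require Import Reals Arith Bool Lra Lia.
From Coquelicot Require Import Coquelicot.
Open Scope R_scope.

Lemma sum1_ext n f g : (forall k, (1 <= k <= n)%nat -> f k = g k) -> sum1 n f = sum1 n g.
Proof. induction n; simpl; intros H; [reflexivity|].
  rewrite IHn by (intros; apply H; lia). rewrite H by lia. reflexivity. Qed.

Lemma sum1_le n f g : (forall k, (1 <= k <= n)%nat -> f k <= g k) -> sum1 n f <= sum1 n g.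
Proof. induction n; simpl; intros H; [lra|].
  assert (sum1 n f <= sum1 n g) by (apply IHn; intros; apply H; lia).
  assert (f (S n) <= g (S n)) by (apply H; lia). lra. Qed.

Lemma sum1_const n c : sum1 n (fun _ => c) = INR n * c.
Proof. induction n; simpl sum1; [simpl; ring|]. rewrite IHn, S_INR. ring. Qed.

Lemma sum1_upd n f g j : (1 <= j <= n)%nat ->
  (forall k, (1 <= k <= n)%nat -> k <> j -> g k = f k) -> sum1 n g = sum1 n f + (g j - f j).
Proof. induction n; intros Hj H; [lia|]. simpl.
  destruct (Nat.eq_dec j (S n)) as [->|Hne].
  - rewrite (sum1_ext n g f) by (intros; apply H; lia). ring.
  - rewrite IHn by (try lia; intros; apply H; lia). rewrite (H (S n)) by lia. ring. Qed.

Definition Fa (y : R) := y * ln y.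
Definition gt (c y : R) := y * ln c - y * ln y.
Definition sg (a b : bool) : R := if Bool.eqb a b then 1 else -1.
Definition Ent d p z w := sum0 p (fun k => sum_ab (fun a b => gt (tau d p k) (zc p z w k a b))).

Lemma phi_split d p z w : phi d p z w = Fa (Afun d p z w) + Fa (Bfun d p z w) + Ent d p z w.
Proof. reflexivity. Qed.

Lemma sum1_lin n (w : nat -> bool -> bool -> R) al be :
  sum1 n (fun j => (al + INR j) * (w j false false + w j true true) + (be - INR j) * (w j false true + w j true false))
  = al * (sum1 n (fun j => w j false false) + sum1 n (fun j => w j true true))
    + be * (sum1 n (fun j => w j false true) + sum1 n (fun j => w j true false))
    + sum1 n (fun j => INR j * (w j false false + w j true true - w j false true - w j true false)).
Proof. induction n; simpl; [ring|]. rewrite IHn. ring. Qed.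

Lemma sum1_lin2 n (w : nat -> bool -> bool -> R) al be :
  sum1 n (fun j => (be - INR j) * (w j false false + w j true true) + (al + INR j) * (w j false true + w j true false))
  = be * (sum1 n (fun j => w j false false) + sum1 n (fun j => w j true true))
    + al * (sum1 n (fun j => w j false true) + sum1 n (fun j => w j true false))
    - sum1 n (fun j => INR j * (w j false false + w j true true - w j false true - w j true false)).
Proof. induction n; simpl; [ring|]. rewrite IHn. ring. Qed.

Lemma A_form d p z w : Afun d p z w = sum0 p (fun j =>
  (INR d / 2 - INR p + INR j) * (zc p z w j false false + zc p z w j true true)
  + (INR p - INR j) * (zc p z w j false true + zc p z w j true false)).
Proof. unfold sum0.
  rewrite (sum1_ext p _ (fun j => (INR d / 2 - INR p + INR j) * (w j false false + w j true true)
  + (INR p - INR j) * (w j false true + w j true false))) by (intros [|k] Hk; [lia|reflexivity]).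
  rewrite sum1_lin. unfold Afun, zc; simpl Bool.eqb. cbv beta iota. simpl INR. field. Qed.

Lemma B_form d p z w : Bfun d p z w = sum0 p (fun j =>
  (INR p - INR j) * (zc p z w j false false + zc p z w j true true)
  + (INR d / 2 - INR p + INR j) * (zc p z w j false true + zc p z w j true false)).
Proof. unfold sum0.
  rewrite (sum1_ext p _ (fun j => (INR p - INR j) * (w j false false + w j true true)
  + (INR d / 2 - INR p + INR j) * (w j false true + w j true false))) by (intros [|k] Hk; [lia|reflexivity]).
  rewrite sum1_lin2. unfold Bfun, Afun, zc; simpl Bool.eqb. cbv beta iota. simpl INR. field. Qed.

Lemma zc_sum p z w a b : sum0 p (fun j => zc p z w j a b) = if Bool.eqb a b then z else / 2 - z.
Proof. unfold sum0. rewrite (sum1_ext p _ (fun j => w j a b)) by (intros [|k] Hk; [lia|reflexivity]).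
  unfold zc. destruct (Bool.eqb a b); ring. Qed.

Lemma upd_j w j a b t a' b' : upd w j a b t j a' b' = if (Bool.eqb a' a && Bool.eqb b' b)%bool then t else w j a' b'.
Proof. unfold upd. rewrite Nat.eqb_refl. reflexivity. Qed.

Lemma upd_nj w j a b t k a' b' : k <> j -> upd w j a b t k a' b' = w k a' b'.
Proof. intros H. unfold upd. apply Nat.eqb_neq in H. rewrite H. reflexivity. Qed.

Lemma sum1_upd_w p w j a b t a' b' : (1 <= j <= p)%nat ->
  sum1 p (fun i => upd w j a b t i a' b') = sum1 p (fun i => w i a' b') +
    (if (Bool.eqb a' a && Bool.eqb b' b)%bool then t - w j a b else 0).
Proof. intros Hj. rewrite (sum1_upd p (fun i => w i a' b')) with (j := j); auto.
  - rewrite upd_j. destruct (Bool.eqb a' a) eqn:E1; destruct (Bool.eqb b' b) eqn:E2; simpl; try ring.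
    apply Bool.eqb_prop in E1, E2. subst. ring.
  - intros k _ Hk. apply upd_nj; auto. Qed.

Lemma Afun_upd d p z w j a b t : (1 <= j <= p)%nat ->
  Afun d p z (upd w j a b t) = Afun d p z w + INR j * sg a b * (t - w j a b).
Proof. intros Hj. unfold Afun.
  rewrite (sum1_upd p (fun k => INR k * (w k false false + w k true true - w k false true - w k true false))) with (j := j); auto.
  - rewrite !upd_j. unfold sg. destruct a, b; simpl; ring.
  - intros k _ Hk. rewrite !upd_nj; auto. Qed.

Lemma zc0_upd p z w j a b t a' b' : (1 <= j <= p)%nat ->
  zc p z (upd w j a b t) 0 a' b' = zc p z w 0 a' b' -
    (if (Bool.eqb a' a && Bool.eqb b' b)%bool then t - w j a b else 0).
Proof. intros Hj. unfold zc. rewrite sum1_upd_w by auto.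
  destruct (Bool.eqb a' b'); ring. Qed.

Lemma Ent_upd d p z w j a b t : (1 <= j <= p)%nat ->
  Ent d p z (upd w j a b t) = Ent d p z w
    - gt (tau d p 0) (zc p z w 0 a b) + gt (tau d p 0) (zc p z w 0 a b - (t - w j a b))
    - gt (tau d p j) (w j a b) + gt (tau d p j) t.
Proof. intros Hj. unfold Ent, sum0.
  rewrite (sum1_upd p (fun k => sum_ab (fun a' b' => gt (tau d p k) (zc p z w k a' b')))) with (j := j); auto.
  - destruct j as [|j]; [lia|]. unfold sum_ab. rewrite !zc0_upd by lia. cbn [zc]. rewrite !upd_j.
    destruct a, b; simpl; rewrite ?Rminus_0_r; ring.
  - intros [|k] Hk Hne; [lia|]. cbn [zc]. unfold sum_ab. rewrite !upd_nj; auto. Qed.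

Lemma Afun_z d p z w t : Afun d p t w = Afun d p z w + (INR d - 4 * INR p) * (t - z).
Proof. unfold Afun; ring. Qed.

Lemma zc0_z p z w t a b : zc p t w 0 a b = zc p z w 0 a b + sg a b * (t - z).
Proof. unfold zc, sg. destruct a, b; simpl; ring. Qed.

Lemma Ent_z d p z w t : Ent d p t w = Ent d p z w
  + sum_ab (fun a b => gt (tau d p 0) (zc p z w 0 a b + sg a b * (t - z)) - gt (tau d p 0) (zc p z w 0 a b)).
Proof. unfold Ent, sum0.
  rewrite (sum1_ext p _ (fun k => sum_ab (fun a' b' => gt (tau d p k) (zc p z w k a' b')))) by (intros [|k] Hk; [lia|reflexivity]).
  unfold sum_ab. rewrite !(zc0_z p z w t). ring. Qed.

Lemma derz d p z w : 0 < Afun d p z w -> 0 < Bfun d p z w ->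
  (forall a b, 0 < zc p z w 0 a b) ->
  is_derive (fun t => phi d p t w) z
   ((INR d - 4 * INR p) * (ln (Afun d p z w) - ln (Bfun d p z w))
    - ln (zc p z w 0 false false) + ln (zc p z w 0 false true)
    + ln (zc p z w 0 true false) - ln (zc p z w 0 true true)).
Proof. intros HA HB Hz.
  apply is_derive_ext with (f := fun t => Fa (Afun d p z w + (INR d - 4 * INR p) * (t - z))
     + Fa (INR d / 2 - (Afun d p z w + (INR d - 4 * INR p) * (t - z))) + Ent d p z w
     + sum_ab (fun a b => gt (tau d p 0) (zc p z w 0 a b + sg a b * (t - z)) - gt (tau d p 0) (zc p z w 0 a b))).
  { intro t. rewrite phi_split, (Ent_z d p z w t). unfold Bfun. rewrite (Afun_z d p z w t). rewrite Rplus_assoc. reflexivity. }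
  unfold Bfun in *. unfold sum_ab, sg. cbn [Bool.eqb].
  generalize (Hz false false) (Hz false true) (Hz true false) (Hz true true).
  set (A := Afun d p z w) in *. set (a1 := zc p z w 0 false false). set (a2 := zc p z w 0 false true).
  set (a3 := zc p z w 0 true false). set (a4 := zc p z w 0 true true). set (E := Ent d p z w).
  set (c := INR d - 4 * INR p). set (T := tau d p 0). set (h := INR d / 2) in *.
  clearbody A a1 a2 a3 a4 E c T h. clear Hz.
  intros. unfold Fa, gt.
  auto_derive.
  - rewrite Rplus_opp_r, !Rmult_0_r, !Rplus_0_r. repeat split; lra.
  - rewrite Rplus_opp_r, !Rmult_0_r, !Rplus_0_r. change (h + - A) with (h - A). field. repeat split; apply Rgt_not_eq; lra.
Qed.


Lemma derw d p z w j a b : (1 <= j <= p)%nat -> 0 < Afun d p z w -> 0 < Bfun d p z w ->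
  0 < zc p z w 0 a b -> 0 < w j a b ->
  is_derive (fun t => phi d p z (upd w j a b t)) (w j a b)
   (INR j * sg a b * (ln (Afun d p z w) - ln (Bfun d p z w))
    + ln (zc p z w 0 a b) - ln (tau d p 0) + ln (tau d p j) - ln (w j a b)).
Proof. intros Hj HA HB Hz Hw.
  apply is_derive_ext with (f := fun t => Fa (Afun d p z w + INR j * sg a b * (t - w j a b))
     + Fa (INR d / 2 - (Afun d p z w + INR j * sg a b * (t - w j a b)))
     + (Ent d p z w - gt (tau d p 0) (zc p z w 0 a b) + gt (tau d p 0) (zc p z w 0 a b - (t - w j a b))
    - gt (tau d p j) (w j a b) + gt (tau d p j) t)).
  { intro t. rewrite phi_split, (Ent_upd d p z w j a b t Hj). unfold Bfun. rewrite (Afun_upd d p z w j a b t Hj). reflexivity. }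
  unfold Bfun in *.
  set (A := Afun d p z w) in *. set (a1 := zc p z w 0 a b) in *. set (t0 := w j a b) in *.
  set (E := Ent d p z w).
  set (c := INR j * sg a b). set (T := tau d p 0). set (Tj := tau d p j). set (h := INR d / 2) in *.
  clearbody A a1 t0 E c T Tj h.
  unfold Fa, gt.
  auto_derive.
  - rewrite Rplus_opp_r, !Rmult_0_r, ?Ropp_0, !Rplus_0_r. repeat split; lra.
  - rewrite Rplus_opp_r, !Rmult_0_r, ?Ropp_0, !Rplus_0_r. change (h + - A) with (h - A). field. repeat split; apply Rgt_not_eq; lra.
Qed.

Lemma sum1_nonneg n f : (forall k, (1 <= k <= n)%nat -> 0 <= f k) -> 0 <= sum1 n f.
Proof. intros H. rewrite <- (Rmult_0_r (INR n)), <- sum1_const. apply sum1_le. auto. Qed.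

Lemma sum1_scal n c f : sum1 n (fun k => c * f k) = c * sum1 n f.
Proof. induction n; simpl; [ring|]. rewrite IHn; ring. Qed.

Lemma sum1_addc n c f : sum1 n (fun k => f k + c) = sum1 n f + INR n * c.
Proof. induction n; simpl sum1; [simpl; ring|]. rewrite IHn, S_INR; ring. Qed.

Lemma sum0_ext_scal n c f g : (forall j, (j <= n)%nat -> f j = c * g j) -> sum0 n f = c * sum0 n g.
Proof. intros H. unfold sum0. rewrite H by lia. rewrite (sum1_ext n f (fun j => c * g j)) by (intros; apply H; lia).
  rewrite sum1_scal. ring. Qed.

Lemma exp_INR_mul n u : exp (INR n * u) = exp u ^ n.
Proof. induction n. simpl. rewrite Rmult_0_l, exp_0. reflexivity.
  rewrite S_INR, Rmult_plus_distr_r, Rmult_1_l, exp_plus, IHn. simpl. ring. Qed.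

Lemma int_pos p z w : inIntK p z w -> forall j a b, (j <= p)%nat -> 0 < zc p z w j a b.
Proof. intros [eps [He H]] j a b Hj. destruct j as [|j].
  - assert (Hk := H (z - sg a b * (eps / 2)) w).
    assert (Hin : inK p (z - sg a b * (eps / 2)) w).
    { apply Hk. unfold sg. destruct (Bool.eqb a b); [rewrite Rabs_left1 | rewrite Rabs_right]; lra.
      intros. rewrite Rminus_diag, Rabs_R0. lra. }
    destruct Hin as [_ Hin]. specialize (Hin 0%nat a b Hj).
    rewrite (zc0_z p z w) in Hin. unfold sg in *. destruct (Bool.eqb a b); lra.
  - assert (Hk := H z (upd w (S j) a b (w (S j) a b - eps / 2))).
    assert (Hin : inK p z (upd w (S j) a b (w (S j) a b - eps / 2))).
    { apply Hk. rewrite Rminus_diag, Rabs_R0. lra.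
      intros j' a' b' Hj'. unfold upd.
      destruct (Nat.eqb j' (S j) && Bool.eqb a' a && Bool.eqb b' b)%bool eqn:E.
      - apply andb_prop in E as [E E3]. apply andb_prop in E as [E1 E2].
        apply Nat.eqb_eq in E1. apply Bool.eqb_prop in E2, E3. subst.
        rewrite Rabs_left1; lra.
      - rewrite Rminus_diag, Rabs_R0. lra. }
    destruct Hin as [_ Hin]. specialize (Hin (S j) a b Hj). cbn [zc] in Hin.
    rewrite upd_j in Hin. rewrite !Bool.eqb_reflx in Hin. simpl in Hin. simpl. lra.
Qed.

Lemma A_pos d p z w : (2 * p < d)%nat -> (forall j a b, (j <= p)%nat -> 0 < zc p z w j a b) ->
  0 < Afun d p z w /\ 0 < Bfun d p z w.
Proof. intros Hd Hp.
  assert (Hd' : INR p < INR d / 2).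
  { apply lt_INR in Hd. rewrite mult_INR in Hd. simpl INR in Hd. lra. }
  assert (Hjj : forall j, (j <= p)%nat -> 0 <= INR p - INR j) by (intros j Hj; apply le_INR in Hj; lra).
  assert (Hj0 : forall j, 0 <= INR j) by apply pos_INR.
  pose proof (Hp 0%nat false false ltac:(lia)). pose proof (Hp 0%nat true true ltac:(lia)).
  pose proof (Hp 0%nat false true ltac:(lia)). pose proof (Hp 0%nat true false ltac:(lia)).
  split; [rewrite A_form | rewrite B_form]; unfold sum0; simpl INR.
  - assert (0 <= sum1 p (fun j => (INR d / 2 - INR p + INR j) * (zc p z w j false false + zc p z w j true true)
      + (INR p - INR j) * (zc p z w j false true + zc p z w j true false))).
    { apply sum1_nonneg. intros k Hk. pose proof (Hjj k ltac:(lia)). pose proof (Hj0 k).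
      pose proof (Hp k false false ltac:(lia)). pose proof (Hp k true true ltac:(lia)).
      pose proof (Hp k false true ltac:(lia)). pose proof (Hp k true false ltac:(lia)). nra. }
    assert (0 < (INR d / 2 - INR p) * (zc p z w 0 false false + zc p z w 0 true true)) by (apply Rmult_lt_0_compat; lra).
    assert (0 <= INR p * (zc p z w 0 false true + zc p z w 0 true false)) by (apply Rmult_le_pos; [apply pos_INR|lra]).
    rewrite ?Rplus_0_r, ?Rminus_0_r. lra.
  - assert (0 <= sum1 p (fun j => (INR p - INR j) * (zc p z w j false false + zc p z w j true true)
      + (INR d / 2 - INR p + INR j) * (zc p z w j false true + zc p z w j true false))).
    { apply sum1_nonneg. intros k Hk. pose proof (Hjj k ltac:(lia)). pose proof (Hj0 k).
      pose proof (Hp k false false ltac:(lia)). pose proof (Hp k true true ltac:(lia)).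
      pose proof (Hp k false true ltac:(lia)). pose proof (Hp k true false ltac:(lia)). nra. }
    assert (0 < (INR d / 2 - INR p) * (zc p z w 0 false true + zc p z w 0 true false)) by (apply Rmult_lt_0_compat; lra).
    assert (0 <= INR p * (zc p z w 0 false false + zc p z w 0 true true)) by (apply Rmult_le_pos; [apply pos_INR|lra]).
    rewrite ?Rplus_0_r, ?Rminus_0_r. lra.
Qed.

Lemma sum0_ext n f g : (forall j, (j <= n)%nat -> f j = g j) -> sum0 n f = sum0 n g.
Proof. intros H. rewrite (sum0_ext_scal n 1 f g). ring. intros; rewrite H by lia; ring. Qed.

Lemma Spos d p x : 0 < x -> (forall j, (j <= p)%nat -> 0 < tau d p j) -> 0 < sum0 p (fun j => tau d p j * x ^ j).
Proof. intros Hx Ht. unfold sum0. simpl pow. rewrite Rmult_1_r.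
  assert (0 <= sum1 p (fun j => tau d p j * x ^ j)).
  { apply sum1_nonneg. intros k Hk. apply Rmult_le_pos. apply Rlt_le, Ht; lia. apply pow_le; lra. }
  pose proof (Ht 0%nat ltac:(lia)). lra. Qed.

Definition EQ d p y :=
  sum0 p (fun j => (INR d / 2 - INR p + INR j) * (2 * (y ^ (d - 4 * p) * tau d p j * (y ^ 2) ^ j))
     + (INR p - INR j) * (2 * (tau d p j * (/ y ^ 2) ^ j)))
  = y ^ 2 * sum0 p (fun j => (INR p - INR j) * (2 * (y ^ (d - 4 * p) * tau d p j * (y ^ 2) ^ j))
     + (INR d / 2 - INR p + INR j) * (2 * (tau d p j * (/ y ^ 2) ^ j))).

Lemma uniq_gen d p (Hd4 : (4 * p <= d)%nat) (Hd2 : (2 * p < d)%nat)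
  (Htau : forall j, (j <= p)%nat -> 0 < tau d p j)
  (HC : sum0 p (tau d p) = Binomial.C d p ^ 2)
  (Hpoly : forall y, 0 < y -> EQ d p y -> y = 1) z w :
  critical d p z w ->
  z = / 4 /\ (forall j a b, (1 <= j <= p)%nat -> w j a b = wstar d p j a b).
Proof.
  intros [Hint [Hdz Hdw]].
  pose proof (int_pos _ _ _ Hint) as Hp.
  destruct (A_pos d p z w Hd2 Hp) as [HA HB].
  assert (Ez := derz d p z w HA HB (fun a b => Hp 0%nat a b (Nat.le_0_l _))).
  apply is_derive_unique in Ez. rewrite (is_derive_unique _ _ _ Hdz) in Ez.
  assert (Ej : forall j a b, (1 <= j <= p)%nat ->
     0 = INR j * sg a b * (ln (Afun d p z w) - ln (Bfun d p z w))
    + ln (zc p z w 0 a b) - ln (tau d p 0) + ln (tau d p j) - ln (w j a b)).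
  { intros j a b Hj. assert (H := derw d p z w j a b Hj HA HB (Hp 0%nat a b (Nat.le_0_l _))).
    assert (Hwp : 0 < w j a b). { destruct j as [|j']; [lia|]. exact (Hp (S j') a b ltac:(lia)). }
    specialize (H Hwp). apply is_derive_unique in H. rewrite (is_derive_unique _ _ _ (Hdw j a b Hj)) in H. exact H. }
  clear Hdz Hdw.
  set (A := Afun d p z w) in *. set (B := Bfun d p z w) in *.
  set (L := ln A - ln B) in *.
  set (x := exp L). set (y := exp (L / 2)).
  assert (Hx : x = A / B). { unfold x, L. unfold Rminus. rewrite exp_plus, exp_Ropp, !exp_ln by lra. reflexivity. }
  assert (Hy : 0 < y) by apply exp_pos.
  assert (Hxy : x = y ^ 2). { unfold x, y. simpl. rewrite Rmult_1_r, <- exp_plus. f_equal. field. }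
  assert (Hx0 : 0 < x) by apply exp_pos.
  pose proof (Htau 0%nat (Nat.le_0_l _)) as Ht0.
  assert (Hzc : forall j a b, (j <= p)%nat ->
    zc p z w j a b = zc p z w 0 a b / tau d p 0 * tau d p j * (if Bool.eqb a b then x else / x) ^ j).
  { intros j a b Hj. destruct j as [|j'].
    - simpl pow. field. lra.
    - assert (E := Ej (S j') a b ltac:(lia)).
      pose proof (Hp (S j') a b Hj) as Hw. pose proof (Hp 0%nat a b (Nat.le_0_l _)) as H0.
      pose proof (Htau (S j') Hj) as Htj.
      change (zc p z w (S j') a b) with (w (S j') a b) in *.
      rewrite <- (exp_ln (w (S j') a b)) by lra.
      replace (ln (w (S j') a b)) with (INR (S j') * (sg a b * L) + ln (zc p z w 0 a b / tau d p 0 * tau d p (S j')))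
        by (rewrite ln_mult, ln_div by (try apply Rdiv_lt_0_compat; lra); lra).
      rewrite exp_plus, exp_ln by (apply Rmult_lt_0_compat; [apply Rdiv_lt_0_compat|]; lra).
      rewrite exp_INR_mul. unfold sg. destruct (Bool.eqb a b).
      + rewrite Rmult_1_l. fold x. ring.
      + replace (-1 * L) with (- L) by ring. rewrite exp_Ropp. fold x. ring. }
  assert (Hsum : forall a b, (if Bool.eqb a b then z else / 2 - z) =
     zc p z w 0 a b / tau d p 0 * sum0 p (fun j => tau d p j * (if Bool.eqb a b then x else / x) ^ j)).
  { intros a b. rewrite <- (zc_sum p z w a b). apply sum0_ext_scal. intros j Hj. rewrite Hzc by lia. ring. }
  assert (HS1 := Spos d p x Hx0 Htau). assert (HS2 := Spos d p (/ x) ltac:(apply Rinv_0_lt_compat; lra) Htau).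
  assert (Htt : zc p z w 0 true true = zc p z w 0 false false).
  { pose proof (Hsum true true) as H1. pose proof (Hsum false false) as H2. cbn [Bool.eqb] in H1, H2.
    rewrite H1 in H2 at 1. apply Rmult_eq_reg_r in H2; [|lra]. apply Rmult_eq_reg_r with (/ tau d p 0).
    exact H2. apply Rinv_neq_0_compat; lra. }
  assert (Htf : zc p z w 0 true false = zc p z w 0 false true).
  { pose proof (Hsum true false) as H1. pose proof (Hsum false true) as H2. cbn [Bool.eqb] in H1, H2.
    rewrite H1 in H2 at 1. apply Rmult_eq_reg_r in H2; [|lra]. apply Rmult_eq_reg_r with (/ tau d p 0).
    exact H2. apply Rinv_neq_0_compat; lra. }
  assert (Hff : zc p z w 0 false false = zc p z w 0 false true * y ^ (d - 4 * p)).
  { pose proof (Hp 0%nat false false (Nat.le_0_l _)). pose proof (Hp 0%nat false true (Nat.le_0_l _)).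
    rewrite <- (exp_ln (zc p z w 0 false false)) by lra.
    rewrite <- (exp_ln (zc p z w 0 false true)) by lra.
    unfold y. rewrite <- exp_INR_mul, <- exp_plus. f_equal.
    rewrite minus_INR by lia. rewrite mult_INR. replace (INR 4) with 4 by (simpl; ring).
    rewrite Htt, Htf in Ez. fold L. lra. }
  assert (HAxB : A = x * B) by (rewrite Hx; field; lra).
  assert (HE : EQ d p y).
  { unfold A, B in HAxB. rewrite A_form, B_form in HAxB.
    pose proof (Hp 0%nat false true (Nat.le_0_l _)) as Hft.
    set (c := zc p z w 0 false true / tau d p 0).
    assert (Hc : 0 < c) by (apply Rdiv_lt_0_compat; lra).
    rewrite (sum0_ext_scal p c _ (fun j => (INR d / 2 - INR p + INR j) * (2 * (y ^ (d - 4 * p) * tau d p j * (y ^ 2) ^ j))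
     + (INR p - INR j) * (2 * (tau d p j * (/ y ^ 2) ^ j)))) in HAxB.
    2: { intros j Hj. rewrite !(Hzc j) by lia. rewrite Htt, Htf, Hff, Hxy. cbn [Bool.eqb]. unfold c. field. lra. }
    rewrite (sum0_ext_scal p c (fun j => (INR p - INR j) * (zc p z w j false false + zc p z w j true true)
  + (INR d / 2 - INR p + INR j) * (zc p z w j false true + zc p z w j true false)) (fun j => (INR p - INR j) * (2 * (y ^ (d - 4 * p) * tau d p j * (y ^ 2) ^ j))
     + (INR d / 2 - INR p + INR j) * (2 * (tau d p j * (/ y ^ 2) ^ j)))) in HAxB.
    2: { intros j Hj. rewrite !(Hzc j) by lia. rewrite Htt, Htf, Hff, Hxy. cbn [Bool.eqb]. unfold c. field. lra. }
    unfold EQ. rewrite Hxy in HAxB. apply Rmult_eq_reg_l with c; [|lra]. rewrite HAxB. ring. }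
  assert (Hy1 := Hpoly y Hy HE).
  assert (Hx1 : x = 1) by (rewrite Hxy, Hy1; ring).
  assert (HS : sum0 p (fun j => tau d p j * (if Bool.eqb true true then x else / x) ^ j) = Binomial.C d p ^ 2).
  { rewrite <- HC. apply sum0_ext. intros j _. simpl. rewrite Hx1, pow1. ring. }
  assert (HS' : sum0 p (fun j => tau d p j * (if Bool.eqb false true then x else / x) ^ j) = Binomial.C d p ^ 2).
  { rewrite <- HC. apply sum0_ext. intros j _. simpl. rewrite Hx1, Rinv_1, pow1. ring. }
  assert (HC0 : 0 < Binomial.C d p ^ 2).
  { rewrite <- HC. unfold sum0. assert (0 <= sum1 p (tau d p)) by (apply sum1_nonneg; intros; apply Rlt_le, Htau; lia). lra. }
  pose proof (Hsum true true) as H1. pose proof (Hsum false true) as H2.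
  rewrite HS in H1. rewrite HS' in H2. cbn [Bool.eqb] in H1, H2.
  rewrite Htt, Hff, Hy1, pow1, Rmult_1_r in H1.
  assert (Hz : z = / 4) by lra.
  split; [exact Hz|].
  intros j a b Hj. unfold wstar.
  assert (Hwj : w j a b = zc p z w j a b) by (destruct j; [lia|reflexivity]).
  rewrite Hwj, Hzc by lia. rewrite Hx1, Rinv_1.
  replace (if Bool.eqb a b then 1 else 1) with 1 by (destruct (Bool.eqb a b); reflexivity). rewrite pow1.
  assert (Hq : zc p z w 0 a b = zc p z w 0 false true).
  { destruct a, b; auto; try rewrite Htt; rewrite Hff, Hy1, pow1; ring. }
  rewrite Hq. replace (zc p z w 0 false true / tau d p 0) with (/ (4 * Binomial.C d p ^ 2)).
  field. intro E0. rewrite E0 in HC0. simpl in HC0. lra.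
  apply Rmult_eq_reg_r with (Binomial.C d p ^ 2); [|lra].
  rewrite <- H2, Hz. field. intro E0. rewrite E0 in HC0. simpl in HC0. lra.
Qed.

Lemma exist_gen d p (Hd2 : (2 * p < d)%nat)
  (Htau : forall j, (j <= p)%nat -> 0 < tau d p j)
  (HC : sum0 p (tau d p) = Binomial.C d p ^ 2)
  (mu : R) (Hmu0 : 0 < mu) (Hmu : forall j, (j <= p)%nat -> mu <= tau d p j) :
  critical d p (/ 4) (wstar d p).
Proof.
  set (K := 4 * Binomial.C d p ^ 2).
  assert (HC0 : 0 < Binomial.C d p ^ 2).
  { rewrite <- HC. unfold sum0. assert (0 <= sum1 p (tau d p)) by (apply sum1_nonneg; intros; apply Rlt_le, Htau; lia).
    pose proof (Htau 0%nat ltac:(lia)). lra. }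
  assert (HCn : Binomial.C d p <> 0) by (intro E0; rewrite E0 in HC0; simpl in HC0; lra).
  assert (HK : 0 < K) by (unfold K; lra).
  assert (Hws : forall j a b, wstar d p j a b = tau d p j / K) by reflexivity.
  assert (Hs1 : forall a b, sum1 p (fun i => wstar d p i a b) = (Binomial.C d p ^ 2 - tau d p 0) / K).
  { intros a b. rewrite (sum1_ext p _ (fun i => / K * tau d p i)) by (intros; unfold wstar; fold K; unfold Rdiv; ring).
    rewrite sum1_scal. rewrite <- HC. unfold sum0. field. lra. }
  assert (Hz0 : forall a b, zc p (/ 4) (wstar d p) 0 a b = tau d p 0 / K).
  { intros a b. unfold zc. rewrite Hs1. unfold K. destruct (Bool.eqb a b); field; exact HCn. }
  pose proof (Htau 0%nat ltac:(lia)) as Ht0.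
  assert (Hdpos : 0 < INR d) by (apply lt_0_INR; lia).
  assert (HAv : Afun d p (/ 4) (wstar d p) = INR d / 4).
  { unfold Afun. rewrite (sum1_ext p _ (fun _ => 0)) by (intros; unfold wstar; ring).
    rewrite sum1_const. field. }
  assert (HBv : Bfun d p (/ 4) (wstar d p) = INR d / 4) by (unfold Bfun; rewrite HAv; field).
  assert (HA : 0 < Afun d p (/ 4) (wstar d p)) by (rewrite HAv; lra).
  assert (HB : 0 < Bfun d p (/ 4) (wstar d p)) by (rewrite HBv; lra).
  assert (Hzp : forall a b, 0 < zc p (/ 4) (wstar d p) 0 a b) by (intros; rewrite Hz0; apply Rdiv_lt_0_compat; lra).
  split; [|split].
  -
    set (P := INR p). assert (HP : 0 <= P) by apply pos_INR.
    set (eps := mu / (K * (P + 2))).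
    assert (Heps0 : 0 < eps) by (unfold eps; apply Rdiv_lt_0_compat; [lra | apply Rmult_lt_0_compat; lra]).
    assert (Heps : eps * (P + 2) = mu / K) by (unfold eps; field; split; lra).
    assert (HmuK : mu <= Binomial.C d p ^ 2).
    { pose proof (Hmu 0%nat ltac:(lia)). rewrite <- HC. unfold sum0.
      assert (0 <= sum1 p (tau d p)) by (apply sum1_nonneg; intros; apply Rlt_le, Htau; lia). lra. }
    assert (HmuK' : mu / K <= / 4) by (unfold K; apply Rmult_le_reg_r with (4 * Binomial.C d p ^ 2); [lra|]; field_simplify; lra).
    exists eps. split; [exact Heps0|]. intros z' w' Hz' Hw'.
    apply Rabs_def2 in Hz'.
    assert (0 <= eps * P) by (apply Rmult_le_pos; lra). destruct Hz'. split; [lra|].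
    intros [|j] a b Hj.
    + assert (Hle : sum1 p (fun i => w' i a b) <= sum1 p (fun i => wstar d p i a b + eps)).
      { apply sum1_le. intros k Hk. specialize (Hw' k a b Hk). apply Rabs_def2 in Hw'. lra. }
      rewrite sum1_addc, Hs1 in Hle. fold P in Hle.
      assert (Hq : tau d p 0 / K >= mu / K) by (apply Rmult_ge_compat_r; [left; apply Rinv_0_lt_compat; lra| apply Rle_ge, Hmu; lia]).
      assert (Hsplit : (Binomial.C d p ^ 2 - tau d p 0) / K = / 4 - tau d p 0 / K) by (unfold K; field; lra).
      unfold zc. destruct (Bool.eqb a b); nra.
    + cbn [zc]. specialize (Hw' (S j) a b ltac:(lia)). apply Rabs_def2 in Hw'. rewrite Hws in Hw'.
      assert (Hq : tau d p (S j) / K >= mu / K) by (apply Rmult_ge_compat_r; [left; apply Rinv_0_lt_compat; lra| apply Rle_ge, Hmu; lia]).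
      nra.
  -
    pose proof (derz d p (/ 4) (wstar d p) HA HB Hzp) as H.
    rewrite !Hz0, HAv, HBv in H.
    match type of H with is_derive _ _ ?v => replace 0 with v by ring end. exact H.
  - intros j a b Hj.
    assert (Hwp : 0 < wstar d p j a b) by (rewrite Hws; apply Rdiv_lt_0_compat; [apply Htau; lia | lra]).
    pose proof (derw d p (/ 4) (wstar d p) j a b Hj HA HB (Hzp a b) Hwp) as H.
    rewrite Hz0, HAv, HBv, Hws in H. rewrite !(ln_div (tau d p _) K) in H by (try apply Htau; lia || lra).
    change (wstar d p j a b) with (tau d p j / K).
    match type of H with is_derive _ _ ?v => replace 0 with v by ring end. exact H.
Qed.

Lemma C_rec n k : (k <= n)%nat -> Binomial.C (S n) (S k) = (INR n + 1) / (INR k + 1) * Binomial.C n k.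
Proof. intros H. unfold Binomial.C. replace (S n - S k)%nat with (n - k)%nat by lia.
  change (Factorial.fact (S n)) with (S n * Factorial.fact n)%nat.
  change (Factorial.fact (S k)) with (S k * Factorial.fact k)%nat.
  rewrite !mult_INR, !S_INR. field.
  split; [apply INR_fact_neq_0|]. split; [apply INR_fact_neq_0|].
  pose proof (pos_INR k). lra. Qed.

Ltac Ccomp := unfold tau; cbn [Nat.sub];
  repeat (rewrite C_rec by lia); rewrite ?C_n_0; rewrite ?INR_IZR_INZ; cbn [Z.of_nat Pos.of_succ_nat Pos.succ]; field.


Lemma tau_6_1_0 : tau 6 1 0 = 30. Proof. Ccomp. Qed.

Lemma tau_6_1_1 : tau 6 1 1 = 6. Proof. Ccomp. Qed.

Lemma C_6_1 : Binomial.C 6 1 = 6.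
Proof. repeat (rewrite C_rec by lia); rewrite ?C_n_0; rewrite ?INR_IZR_INZ; cbn [Z.of_nat Pos.of_succ_nat Pos.succ]; field. Qed.

Lemma taupos_6_1 j : (j <= 1)%nat -> 6 <= tau 6 1 j.
Proof. intros Hj. assert (j = 0 \/ j = 1)%nat as Hc by lia.
  repeat destruct Hc as [Hc|Hc]; subst; rewrite ?tau_6_1_0, ?tau_6_1_1; lra. Qed.

Lemma HC_6_1 : sum0 1 (tau 6 1) = Binomial.C 6 1 ^ 2.
Proof. unfold sum0. cbn [sum1]. rewrite ?tau_6_1_0, ?tau_6_1_1, C_6_1. ring. Qed.

Lemma Npos_6_1 y : 0 < y -> 0 < (24) * y ^ 0 + (24) * y ^ 1 + (24) * y ^ 2 + (24) * y ^ 3.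
Proof. intros Hy.
  assert (0 < y ^ 0) by (apply pow_lt; lra).
  assert (0 < y ^ 1) by (apply pow_lt; lra).
  assert (0 < y ^ 2) by (apply pow_lt; lra).
  assert (0 < y ^ 3) by (apply pow_lt; lra).
  lra.
Qed.

Lemma poly_6_1 y : 0 < y -> EQ 6 1 y -> y = 1.
Proof. intros Hy HE. unfold EQ, sum0 in HE. cbn [sum1] in HE.
  rewrite ?tau_6_1_0, ?tau_6_1_1 in HE.
  rewrite ?INR_IZR_INZ in HE. cbn [Z.of_nat Pos.of_succ_nat Pos.succ Nat.sub Nat.mul Nat.add] in HE.
  pose proof (Npos_6_1 y Hy) as HN.
  match type of HE with ?l = ?r => assert (Hid : (r - l) * y ^ 2 = (y - 1) * (y ^ 2 * ((24) * y ^ 0 + (24) * y ^ 1 + (24) * y ^ 2 + (24) * y ^ 3))) by (field; lra) end.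
  assert (HZ : (y - 1) * (y ^ 2 * ((24) * y ^ 0 + (24) * y ^ 1 + (24) * y ^ 2 + (24) * y ^ 3)) = 0) by (rewrite <- Hid, HE; ring).
  apply Rmult_integral in HZ. destruct HZ as [HZ|HZ]; [lra|]. exfalso.
  assert (0 < y ^ 2) by (apply pow_lt; lra). nra.
Qed.

Lemma case_6_1 : critical 6 1 (/ 4) (wstar 6 1) /\
  (forall (z : R) (w : nat -> bool -> bool -> R), critical 6 1 z w ->
     z = / 4 /\ (forall j a b, (1 <= j <= 1)%nat -> w j a b = wstar 6 1 j a b)).
Proof.
  assert (Ht : forall j, (j <= 1)%nat -> 0 < tau 6 1 j) by (intros j Hj; pose proof (taupos_6_1 j Hj); lra).
  split.
  - apply (exist_gen 6 1 ltac:(lia) Ht HC_6_1 6); [lra | exact taupos_6_1].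
  - apply (uniq_gen 6 1 ltac:(lia) ltac:(lia) Ht HC_6_1 poly_6_1).
Qed.

Lemma tau_10_2_0 : tau 10 2 0 = 1260. Proof. Ccomp. Qed.

Lemma tau_10_2_1 : tau 10 2 1 = 720. Proof. Ccomp. Qed.

Lemma tau_10_2_2 : tau 10 2 2 = 45. Proof. Ccomp. Qed.

Lemma C_10_2 : Binomial.C 10 2 = 45.
Proof. repeat (rewrite C_rec by lia); rewrite ?C_n_0; rewrite ?INR_IZR_INZ; cbn [Z.of_nat Pos.of_succ_nat Pos.succ]; field. Qed.

Lemma taupos_10_2 j : (j <= 2)%nat -> 45 <= tau 10 2 j.
Proof. intros Hj. assert (j = 0 \/ j = 1 \/ j = 2)%nat as Hc by lia.
  repeat destruct Hc as [Hc|Hc]; subst; rewrite ?tau_10_2_0, ?tau_10_2_1, ?tau_10_2_2; lra. Qed.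

Lemma HC_10_2 : sum0 2 (tau 10 2) = Binomial.C 10 2 ^ 2.
Proof. unfold sum0. cbn [sum1]. rewrite ?tau_10_2_0, ?tau_10_2_1, ?tau_10_2_2, C_10_2. ring. Qed.

Lemma Npos_10_2 y : 0 < y -> 0 < (990) * y ^ 0 + (990) * y ^ 1 + (270) * y ^ 2 + (270) * y ^ 3 + (270) * y ^ 4 + (270) * y ^ 5 + (990) * y ^ 6 + (990) * y ^ 7.
Proof. intros Hy.
  assert (0 < y ^ 0) by (apply pow_lt; lra).
  assert (0 < y ^ 1) by (apply pow_lt; lra).
  assert (0 < y ^ 2) by (apply pow_lt; lra).
  assert (0 < y ^ 3) by (apply pow_lt; lra).
  assert (0 < y ^ 4) by (apply pow_lt; lra).
  assert (0 < y ^ 5) by (apply pow_lt; lra).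
  assert (0 < y ^ 6) by (apply pow_lt; lra).
  assert (0 < y ^ 7) by (apply pow_lt; lra).
  lra.
Qed.

Lemma poly_10_2 y : 0 < y -> EQ 10 2 y -> y = 1.
Proof. intros Hy HE. unfold EQ, sum0 in HE. cbn [sum1] in HE.
  rewrite ?tau_10_2_0, ?tau_10_2_1, ?tau_10_2_2 in HE.
  rewrite ?INR_IZR_INZ in HE. cbn [Z.of_nat Pos.of_succ_nat Pos.succ Nat.sub Nat.mul Nat.add] in HE.
  pose proof (Npos_10_2 y Hy) as HN.
  match type of HE with ?l = ?r => assert (Hid : (r - l) * y ^ 4 = (y - 1) * (y ^ 2 * ((990) * y ^ 0 + (990) * y ^ 1 + (270) * y ^ 2 + (270) * y ^ 3 + (270) * y ^ 4 + (270) * y ^ 5 + (990) * y ^ 6 + (990) * y ^ 7))) by (field; lra) end.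
  assert (HZ : (y - 1) * (y ^ 2 * ((990) * y ^ 0 + (990) * y ^ 1 + (270) * y ^ 2 + (270) * y ^ 3 + (270) * y ^ 4 + (270) * y ^ 5 + (990) * y ^ 6 + (990) * y ^ 7)) = 0) by (rewrite <- Hid, HE; ring).
  apply Rmult_integral in HZ. destruct HZ as [HZ|HZ]; [lra|]. exfalso.
  assert (0 < y ^ 2) by (apply pow_lt; lra). nra.
Qed.

Lemma case_10_2 : critical 10 2 (/ 4) (wstar 10 2) /\
  (forall (z : R) (w : nat -> bool -> bool -> R), critical 10 2 z w ->
     z = / 4 /\ (forall j a b, (1 <= j <= 2)%nat -> w j a b = wstar 10 2 j a b)).
Proof.
  assert (Ht : forall j, (j <= 2)%nat -> 0 < tau 10 2 j) by (intros j Hj; pose proof (taupos_10_2 j Hj); lra).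
  split.
  - apply (exist_gen 10 2 ltac:(lia) Ht HC_10_2 45); [lra | exact taupos_10_2].
  - apply (uniq_gen 10 2 ltac:(lia) ltac:(lia) Ht HC_10_2 poly_10_2).
Qed.

Lemma tau_13_3_0 : tau 13 3 0 = 34320. Proof. Ccomp. Qed.

Lemma tau_13_3_1 : tau 13 3 1 = 38610. Proof. Ccomp. Qed.

Lemma tau_13_3_2 : tau 13 3 2 = 8580. Proof. Ccomp. Qed.

Lemma tau_13_3_3 : tau 13 3 3 = 286. Proof. Ccomp. Qed.

Lemma C_13_3 : Binomial.C 13 3 = 286.
Proof. repeat (rewrite C_rec by lia); rewrite ?C_n_0; rewrite ?INR_IZR_INZ; cbn [Z.of_nat Pos.of_succ_nat Pos.succ]; field. Qed.

Lemma taupos_13_3 j : (j <= 3)%nat -> 286 <= tau 13 3 j.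
Proof. intros Hj. assert (j = 0 \/ j = 1 \/ j = 2 \/ j = 3)%nat as Hc by lia.
  repeat destruct Hc as [Hc|Hc]; subst; rewrite ?tau_13_3_0, ?tau_13_3_1, ?tau_13_3_2, ?tau_13_3_3; lra. Qed.

Lemma HC_13_3 : sum0 3 (tau 13 3) = Binomial.C 13 3 ^ 2.
Proof. unfold sum0. cbn [sum1]. rewrite ?tau_13_3_0, ?tau_13_3_1, ?tau_13_3_2, ?tau_13_3_3, C_13_3. ring. Qed.

Lemma Npos_13_3 y : 0 < y -> 0 < (13442) * y ^ 0 + (13442) * y ^ 1 + (73502) * y ^ 2 + (73502) * y ^ 3 + (-68068) * y ^ 4 + (172172) * y ^ 5 + (-68068) * y ^ 6 + (73502) * y ^ 7 + (73502) * y ^ 8 + (13442) * y ^ 9 + (13442) * y ^ 10.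
Proof. intros Hy.
  assert (0 < y ^ 0) by (apply pow_lt; lra).
  assert (0 < y ^ 1) by (apply pow_lt; lra).
  assert (0 < y ^ 2) by (apply pow_lt; lra).
  assert (0 < y ^ 3) by (apply pow_lt; lra).
  assert (0 < y ^ 4) by (apply pow_lt; lra).
  assert (0 < y ^ 5) by (apply pow_lt; lra).
  assert (0 < y ^ 6) by (apply pow_lt; lra).
  assert (0 < y ^ 7) by (apply pow_lt; lra).
  assert (0 < y ^ 8) by (apply pow_lt; lra).
  assert (0 < y ^ 9) by (apply pow_lt; lra).
  assert (0 < y ^ 10) by (apply pow_lt; lra).
  assert (0 <= y ^ 3 * (1 - y) ^ 2) by (apply Rmult_le_pos; [apply pow_le; lra| apply pow2_ge_0]).
  assert (0 <= y ^ 5 * (1 - y) ^ 2) by (apply Rmult_le_pos; [apply pow_le; lra| apply pow2_ge_0]).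
  lra.
Qed.

Lemma poly_13_3 y : 0 < y -> EQ 13 3 y -> y = 1.
Proof. intros Hy HE. unfold EQ, sum0 in HE. cbn [sum1] in HE.
  rewrite ?tau_13_3_0, ?tau_13_3_1, ?tau_13_3_2, ?tau_13_3_3 in HE.
  rewrite ?INR_IZR_INZ in HE. cbn [Z.of_nat Pos.of_succ_nat Pos.succ Nat.sub Nat.mul Nat.add] in HE.
  pose proof (Npos_13_3 y Hy) as HN.
  match type of HE with ?l = ?r => assert (Hid : (r - l) * y ^ 6 = (y - 1) * (y ^ 2 * ((13442) * y ^ 0 + (13442) * y ^ 1 + (73502) * y ^ 2 + (73502) * y ^ 3 + (-68068) * y ^ 4 + (172172) * y ^ 5 + (-68068) * y ^ 6 + (73502) * y ^ 7 + (73502) * y ^ 8 + (13442) * y ^ 9 + (13442) * y ^ 10))) by (field; lra) end.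
  assert (HZ : (y - 1) * (y ^ 2 * ((13442) * y ^ 0 + (13442) * y ^ 1 + (73502) * y ^ 2 + (73502) * y ^ 3 + (-68068) * y ^ 4 + (172172) * y ^ 5 + (-68068) * y ^ 6 + (73502) * y ^ 7 + (73502) * y ^ 8 + (13442) * y ^ 9 + (13442) * y ^ 10)) = 0) by (rewrite <- Hid, HE; ring).
  apply Rmult_integral in HZ. destruct HZ as [HZ|HZ]; [lra|]. exfalso.
  assert (0 < y ^ 2) by (apply pow_lt; lra). nra.
Qed.

Lemma case_13_3 : critical 13 3 (/ 4) (wstar 13 3) /\
  (forall (z : R) (w : nat -> bool -> bool -> R), critical 13 3 z w ->
     z = / 4 /\ (forall j a b, (1 <= j <= 3)%nat -> w j a b = wstar 13 3 j a b)).
Proof.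
  assert (Ht : forall j, (j <= 3)%nat -> 0 < tau 13 3 j) by (intros j Hj; pose proof (taupos_13_3 j Hj); lra).
  split.
  - apply (exist_gen 13 3 ltac:(lia) Ht HC_13_3 286); [lra | exact taupos_13_3].
  - apply (uniq_gen 13 3 ltac:(lia) ltac:(lia) Ht HC_13_3 poly_13_3).
Qed.

Lemma tau_14_3_0 : tau 14 3 0 = 60060. Proof. Ccomp. Qed.

Lemma tau_14_3_1 : tau 14 3 1 = 60060. Proof. Ccomp. Qed.

Lemma tau_14_3_2 : tau 14 3 2 = 12012. Proof. Ccomp. Qed.

Lemma tau_14_3_3 : tau 14 3 3 = 364. Proof. Ccomp. Qed.

Lemma C_14_3 : Binomial.C 14 3 = 364.
Proof. repeat (rewrite C_rec by lia); rewrite ?C_n_0; rewrite ?INR_IZR_INZ; cbn [Z.of_nat Pos.of_succ_nat Pos.succ]; field. Qed.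

Lemma taupos_14_3 j : (j <= 3)%nat -> 364 <= tau 14 3 j.
Proof. intros Hj. assert (j = 0 \/ j = 1 \/ j = 2 \/ j = 3)%nat as Hc by lia.
  repeat destruct Hc as [Hc|Hc]; subst; rewrite ?tau_14_3_0, ?tau_14_3_1, ?tau_14_3_2, ?tau_14_3_3; lra. Qed.

Lemma HC_14_3 : sum0 3 (tau 14 3) = Binomial.C 14 3 ^ 2.
Proof. unfold sum0. cbn [sum1]. rewrite ?tau_14_3_0, ?tau_14_3_1, ?tau_14_3_2, ?tau_14_3_3, C_14_3. ring. Qed.

Lemma Npos_14_3 y : 0 < y -> 0 < (18928) * y ^ 0 + (18928) * y ^ 1 + (115024) * y ^ 2 + (115024) * y ^ 3 + (-125216) * y ^ 4 + (-125216) * y ^ 5 + (-125216) * y ^ 6 + (-125216) * y ^ 7 + (115024) * y ^ 8 + (115024) * y ^ 9 + (18928) * y ^ 10 + (18928) * y ^ 11.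
Proof. intros Hy.
  replace ((18928) * y ^ 0 + (18928) * y ^ 1 + (115024) * y ^ 2 + (115024) * y ^ 3 + (-125216) * y ^ 4 + (-125216) * y ^ 5 + (-125216) * y ^ 6 + (-125216) * y ^ 7 + (115024) * y ^ 8 + (115024) * y ^ 9 + (18928) * y ^ 10 + (18928) * y ^ 11) with ((1 + y) * (1 + y ^ 2) * (18928 * (y ^ 4 - 1) ^ 2 + 96096 * y ^ 2 * (1 - y ^ 2) ^ 2 + 8736 * y ^ 4)) by ring.
  assert (0 <= (y ^ 4 - 1) ^ 2) by apply pow2_ge_0.
  assert (0 <= y ^ 2 * (1 - y ^ 2) ^ 2) by (apply Rmult_le_pos; [apply pow_le; lra| apply pow2_ge_0]).
  assert (0 < y ^ 4) by (apply pow_lt; lra). assert (0 < y ^ 2) by (apply pow_lt; lra).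
  apply Rmult_lt_0_compat; [apply Rmult_lt_0_compat|]; lra.
Qed.

Lemma poly_14_3 y : 0 < y -> EQ 14 3 y -> y = 1.
Proof. intros Hy HE. unfold EQ, sum0 in HE. cbn [sum1] in HE.
  rewrite ?tau_14_3_0, ?tau_14_3_1, ?tau_14_3_2, ?tau_14_3_3 in HE.
  rewrite ?INR_IZR_INZ in HE. cbn [Z.of_nat Pos.of_succ_nat Pos.succ Nat.sub Nat.mul Nat.add] in HE.
  pose proof (Npos_14_3 y Hy) as HN.
  match type of HE with ?l = ?r => assert (Hid : (r - l) * y ^ 6 = (y - 1) * (y ^ 2 * ((18928) * y ^ 0 + (18928) * y ^ 1 + (115024) * y ^ 2 + (115024) * y ^ 3 + (-125216) * y ^ 4 + (-125216) * y ^ 5 + (-125216) * y ^ 6 + (-125216) * y ^ 7 + (115024) * y ^ 8 + (115024) * y ^ 9 + (18928) * y ^ 10 + (18928) * y ^ 11))) by (field; lra) end.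
  assert (HZ : (y - 1) * (y ^ 2 * ((18928) * y ^ 0 + (18928) * y ^ 1 + (115024) * y ^ 2 + (115024) * y ^ 3 + (-125216) * y ^ 4 + (-125216) * y ^ 5 + (-125216) * y ^ 6 + (-125216) * y ^ 7 + (115024) * y ^ 8 + (115024) * y ^ 9 + (18928) * y ^ 10 + (18928) * y ^ 11)) = 0) by (rewrite <- Hid, HE; ring).
  apply Rmult_integral in HZ. destruct HZ as [HZ|HZ]; [lra|]. exfalso.
  assert (0 < y ^ 2) by (apply pow_lt; lra). nra.
Qed.

Lemma case_14_3 : critical 14 3 (/ 4) (wstar 14 3) /\
  (forall (z : R) (w : nat -> bool -> bool -> R), critical 14 3 z w ->
     z = / 4 /\ (forall j a b, (1 <= j <= 3)%nat -> w j a b = wstar 14 3 j a b)).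
Proof.
  assert (Ht : forall j, (j <= 3)%nat -> 0 < tau 14 3 j) by (intros j Hj; pose proof (taupos_14_3 j Hj); lra).
  split.
  - apply (exist_gen 14 3 ltac:(lia) Ht HC_14_3 364); [lra | exact taupos_14_3].
  - apply (uniq_gen 14 3 ltac:(lia) ltac:(lia) Ht HC_14_3 poly_14_3).
Qed.

Lemma tau_17_4_0 : tau 17 4 0 = 1701700. Proof. Ccomp. Qed.

Lemma tau_17_4_1 : tau 17 4 1 = 2722720. Proof. Ccomp. Qed.

Lemma tau_17_4_2 : tau 17 4 2 = 1113840. Proof. Ccomp. Qed.

Lemma tau_17_4_3 : tau 17 4 3 = 123760. Proof. Ccomp. Qed.

Lemma tau_17_4_4 : tau 17 4 4 = 2380. Proof. Ccomp. Qed.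

Lemma C_17_4 : Binomial.C 17 4 = 2380.
Proof. repeat (rewrite C_rec by lia); rewrite ?C_n_0; rewrite ?INR_IZR_INZ; cbn [Z.of_nat Pos.of_succ_nat Pos.succ]; field. Qed.

Lemma taupos_17_4 j : (j <= 4)%nat -> 2380 <= tau 17 4 j.
Proof. intros Hj. assert (j = 0 \/ j = 1 \/ j = 2 \/ j = 3 \/ j = 4)%nat as Hc by lia.
  repeat destruct Hc as [Hc|Hc]; subst; rewrite ?tau_17_4_0, ?tau_17_4_1, ?tau_17_4_2, ?tau_17_4_3, ?tau_17_4_4; lra. Qed.

Lemma HC_17_4 : sum0 4 (tau 17 4) = Binomial.C 17 4 ^ 2.
Proof. unfold sum0. cbn [sum1]. rewrite ?tau_17_4_0, ?tau_17_4_1, ?tau_17_4_2, ?tau_17_4_3, ?tau_17_4_4, C_17_4. ring. Qed.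

Lemma Npos_17_4 y : 0 < y -> 0 < (207060) * y ^ 0 + (207060) * y ^ 1 + (2806020) * y ^ 2 + (2806020) * y ^ 3 + (4662420) * y ^ 4 + (4662420) * y ^ 5 + (-11673900) * y ^ 6 + (3641400) * y ^ 7 + (-11673900) * y ^ 8 + (4662420) * y ^ 9 + (4662420) * y ^ 10 + (2806020) * y ^ 11 + (2806020) * y ^ 12 + (207060) * y ^ 13 + (207060) * y ^ 14.
Proof. intros Hy.
  assert (0 < y ^ 0) by (apply pow_lt; lra).
  assert (0 < y ^ 1) by (apply pow_lt; lra).
  assert (0 < y ^ 2) by (apply pow_lt; lra).
  assert (0 < y ^ 3) by (apply pow_lt; lra).
  assert (0 < y ^ 4) by (apply pow_lt; lra).
  assert (0 < y ^ 5) by (apply pow_lt; lra).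
  assert (0 < y ^ 6) by (apply pow_lt; lra).
  assert (0 < y ^ 7) by (apply pow_lt; lra).
  assert (0 < y ^ 8) by (apply pow_lt; lra).
  assert (0 < y ^ 9) by (apply pow_lt; lra).
  assert (0 < y ^ 10) by (apply pow_lt; lra).
  assert (0 < y ^ 11) by (apply pow_lt; lra).
  assert (0 < y ^ 12) by (apply pow_lt; lra).
  assert (0 < y ^ 13) by (apply pow_lt; lra).
  assert (0 < y ^ 14) by (apply pow_lt; lra).
  assert (0 <= y ^ 5 * ((1 - y) ^ 2) ^ 2) by (apply Rmult_le_pos; [apply pow_le; lra| apply pow2_ge_0]).
  assert (0 <= y ^ 6 * (1 - y) ^ 2) by (apply Rmult_le_pos; [apply pow_le; lra| apply pow2_ge_0]).
  assert (0 <= y ^ 4 * (1 - y ^ 3) ^ 2) by (apply Rmult_le_pos; [apply pow_le; lra| apply pow2_ge_0]).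
  assert (0 <= y ^ 3 * (1 - y ^ 4) ^ 2) by (apply Rmult_le_pos; [apply pow_le; lra| apply pow2_ge_0]).
  assert (0 <= y ^ 2 * (1 - y ^ 5) ^ 2) by (apply Rmult_le_pos; [apply pow_le; lra| apply pow2_ge_0]).
  assert (0 <= y ^ 1 * (1 - y ^ 6) ^ 2) by (apply Rmult_le_pos; [apply pow_le; lra| apply pow2_ge_0]).
  assert (0 <= y ^ 0 * (1 - y ^ 7) ^ 2) by (apply Rmult_le_pos; [apply pow_le; lra| apply pow2_ge_0]).
  lra.
Qed.

Lemma poly_17_4 y : 0 < y -> EQ 17 4 y -> y = 1.
Proof. intros Hy HE. unfold EQ, sum0 in HE. cbn [sum1] in HE.
  rewrite ?tau_17_4_0, ?tau_17_4_1, ?tau_17_4_2, ?tau_17_4_3, ?tau_17_4_4 in HE.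
  rewrite ?INR_IZR_INZ in HE. cbn [Z.of_nat Pos.of_succ_nat Pos.succ Nat.sub Nat.mul Nat.add] in HE.
  pose proof (Npos_17_4 y Hy) as HN.
  match type of HE with ?l = ?r => assert (Hid : (r - l) * y ^ 8 = (y - 1) * (y ^ 2 * ((207060) * y ^ 0 + (207060) * y ^ 1 + (2806020) * y ^ 2 + (2806020) * y ^ 3 + (4662420) * y ^ 4 + (4662420) * y ^ 5 + (-11673900) * y ^ 6 + (3641400) * y ^ 7 + (-11673900) * y ^ 8 + (4662420) * y ^ 9 + (4662420) * y ^ 10 + (2806020) * y ^ 11 + (2806020) * y ^ 12 + (207060) * y ^ 13 + (207060) * y ^ 14))) by (field; lra) end.
  assert (HZ : (y - 1) * (y ^ 2 * ((207060) * y ^ 0 + (207060) * y ^ 1 + (2806020) * y ^ 2 + (2806020) * y ^ 3 + (4662420) * y ^ 4 + (4662420) * y ^ 5 + (-11673900) * y ^ 6 + (3641400) * y ^ 7 + (-11673900) * y ^ 8 + (4662420) * y ^ 9 + (4662420) * y ^ 10 + (2806020) * y ^ 11 + (2806020) * y ^ 12 + (207060) * y ^ 13 + (207060) * y ^ 14)) = 0) by (rewrite <- Hid, HE; ring).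
  apply Rmult_integral in HZ. destruct HZ as [HZ|HZ]; [lra|]. exfalso.
  assert (0 < y ^ 2) by (apply pow_lt; lra). nra.
Qed.

Lemma case_17_4 : critical 17 4 (/ 4) (wstar 17 4) /\
  (forall (z : R) (w : nat -> bool -> bool -> R), critical 17 4 z w ->
     z = / 4 /\ (forall j a b, (1 <= j <= 4)%nat -> w j a b = wstar 17 4 j a b)).
Proof.
  assert (Ht : forall j, (j <= 4)%nat -> 0 < tau 17 4 j) by (intros j Hj; pose proof (taupos_17_4 j Hj); lra).
  split.
  - apply (exist_gen 17 4 ltac:(lia) Ht HC_17_4 2380); [lra | exact taupos_17_4].
  - apply (uniq_gen 17 4 ltac:(lia) ltac:(lia) Ht HC_17_4 poly_17_4).
Qed.

Theorem lemmaA2 (d p : nat) :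
  ((d = 6 /\ p = 1) \/ (d = 10 /\ p = 2) \/ (d = 13 /\ p = 3) \/
   (d = 14 /\ p = 3) \/ (d = 17 /\ p = 4))%nat ->
  critical d p (/ 4) (wstar d p) /\
  (forall (z : R) (w : nat -> bool -> bool -> R),
     critical d p z w ->
     z = / 4 /\ (forall j a b, (1 <= j <= p)%nat -> w j a b = wstar d p j a b)).
Proof.
  intros H.
  destruct H as [[-> ->]|[[-> ->]|[[-> ->]|[[-> ->]|[-> ->]]]]].
  - exact case_6_1.
  - exact case_10_2.
  - exact case_13_3.
  - exact case_14_3.
  - exact case_17_4.
Qed.
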